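(* Consider the following three-dimensional unital algebras over $\mathbb{F}_2$, each with basis $1,x,y$: A: $x^2=y^2=xy=yx=0$; B: $x^2=x$, $y^2=y$, $xy=yx=0$; C: $x^2=x$, $y^2=xy=yx=0$; D: $x^2=y$, $y^2=x$, $xy=yx=x+y$; E: $x^2=y$, $y^2=xy=yx=0$; F: $y^2=x$, $xy=yx=1+x$, $x^2=1+x+y$; G (noncommutative): $x^2=x$, $y^2=0$, $xy=y$, $yx=0$. Then: (i) the algebras A, D and E admit no one-dimensional left-parallelisable first order differential calculus; (ii) for none of the algebras A–G does any one-dimensional left-parallelisable first order differential calculus admit a quantum metric that is central and invertible.
   Context: A one-dimensional left-parallelisable first order differential calculus on $A$ is an $A$-bimodule $\Omega^1$ which is free of rank one as a left $A$-module, on a basis $\omega$, together with a linear map $\mathrm{d}:A\to\Omega^1$ satisfying the Leibniz rule $\mathrm{d}(ab)=(\mathrm{d}a)b+a\,\mathrm{d}b$, such that $\Omega^1$ is spanned by elements $a\,\mathrm{d}b$ ($a,b\in A$). An element $g\in\Omega^1\otimes_A\Omega^1$ is central if $ag=ga$ for all $a\in A$, and invertible if there is a bimodule map $(\ ,\ ):\Omega^1\otimes_A\Omega^1\to A$ with $((\eta,\ )\otimes\mathrm{id})g=\eta=(\mathrm{id}\otimes(\ ,\eta))g$ for all $\eta\in\Omega^1$. *)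

(* Defs.v *)
From HB Require Import structures.
From mathcomp Require Import all_boot all_order all_algebra.
Set Implicit Arguments. Unset Strict Implicit. Unset Printing Implicit Defensive.
Import GRing.Theory.
Local Open Scope ring_scope.

(* The seven 3-dimensional unital F_2-algebras, on the common carrier  *)
(* F_2^3; an element (a, b, c) stands for a*1 + b*x + c*y.             *)

Definition alg : Type := ('F_2 * 'F_2 * 'F_2)%type.

Definition mk3 (a b c : 'F_2) : alg := (a, b, c).
Definition e1 : alg := mk3 1 0 0.
Definition ex : alg := mk3 0 1 0.
Definition ey : alg := mk3 0 0 1.
Definition z3 : alg := mk3 0 0 0.

Definition sc3 (k : 'F_2) (u : alg) : alg :=
  let: (a, b, c) := u in mk3 (k * a) (k * b) (k * c).

Inductive algname := AlgA | AlgB | AlgC | AlgD | AlgE | AlgF | AlgG.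

Definition xx (n : algname) : alg :=
  match n with
  | AlgA => z3 | AlgB => ex | AlgC => ex | AlgD => ey | AlgE => ey
  | AlgF => mk3 1 1 1 | AlgG => ex end.
Definition xy (n : algname) : alg :=
  match n with
  | AlgA => z3 | AlgB => z3 | AlgC => z3 | AlgD => mk3 0 1 1 | AlgE => z3
  | AlgF => mk3 1 1 0 | AlgG => ey end.
Definition yx (n : algname) : alg :=
  match n with
  | AlgA => z3 | AlgB => z3 | AlgC => z3 | AlgD => mk3 0 1 1 | AlgE => z3
  | AlgF => mk3 1 1 0 | AlgG => z3 end.
Definition yy (n : algname) : alg :=
  match n with
  | AlgA => z3 | AlgB => ey | AlgC => z3 | AlgD => ex | AlgE => z3
  | AlgF => ex | AlgG => z3 end.

Definition amul (n : algname) (u v : alg) : alg :=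
  let: (a, b, c) := u in let: (a', b', c') := v in
  sc3 (a * a') e1 + sc3 (a * b' + b * a') ex + sc3 (a * c' + c * a') ey
  + sc3 (b * b') (xx n) + sc3 (b * c') (xy n)
  + sc3 (c * b') (yx n) + sc3 (c * c') (yy n).

Section Calculus.
Variables (n : algname) (M : zmodType).
Variables (lact : alg -> M -> M) (ract : M -> alg -> M).

Definition is_bimodule : Prop :=
  (forall a b m, lact (a + b) m = lact a m + lact b m) /\
  (forall a m m', lact a (m + m') = lact a m + lact a m') /\
  (forall m, lact e1 m = m) /\
  (forall a b m, lact (amul n a b) m = lact a (lact b m)) /\
  (forall a b m, ract m (a + b) = ract m a + ract m b) /\
  (forall a m m', ract (m + m') a = ract m a + ract m' a) /\
  (forall m, ract m e1 = m) /\
  (forall a b m, ract m (amul n a b) = ract (ract m a) b) /\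
  (forall a b m, ract (lact a m) b = lact a (ract m b)).

Definition left_free_basis (w : M) : Prop :=
  forall m : M, exists! a : alg, m = lact a w.

(* one-dimensional left-parallelisable first order differential calculus;
   d is F_2-linear, i.e. additive *)
Definition is_lp_fodc (d : alg -> M) (w : M) : Prop :=
  [/\ is_bimodule, left_free_basis w,
      (forall a b, d (a + b) = d a + d b),
      (forall a b, d (amul n a b) = ract (d a) b + lact a (d b)) &
      (forall m : M, exists s : seq (alg * alg),
          m = \sum_(p <- s) lact p.1 (d p.2))].

(* Elements of Omega^1 (x)_A Omega^1 are represented by finite formal sums
   sum_i eta_i (x) xi_i, i.e. by s : seq (M * M).  Two such sums are equal
   in the tensor product iff they agree under every A-balanced biadditive
   map into any abelian group (universal property of (x)_A). *)
Definition balanced (G : zmodType) (beta : M -> M -> G) : Prop :=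
  [/\ (forall m m' k, beta (m + m') k = beta m k + beta m' k),
      (forall m k k', beta m (k + k') = beta m k + beta m k') &
      (forall m a k, beta (ract m a) k = beta m (lact a k))].

Definition teq (s t : seq (M * M)) : Prop :=
  forall (G : zmodType) (beta : M -> M -> G), balanced beta ->
    \sum_(p <- s) beta p.1 p.2 = \sum_(p <- t) beta p.1 p.2.

Definition central (g : seq (M * M)) : Prop :=
  forall a : alg,
    teq [seq (lact a p.1, p.2) | p <- g] [seq (p.1, ract p.2 a) | p <- g].

(* a bimodule map ( , ) : Omega^1 (x)_A Omega^1 -> A, given (via the
   universal property) by an A-balanced biadditive map compatible with
   the outer left and right actions *)
Definition bimod_pairing (beta : M -> M -> alg) : Prop :=
  [/\ balanced beta,
      (forall a m k, beta (lact a m) k = amul n a (beta m k)) &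
      (forall a m k, beta m (ract k a) = amul n (beta m k) a)].

Definition invertible (g : seq (M * M)) : Prop :=
  exists beta : M -> M -> alg, bimod_pairing beta /\
    (forall eta : M, \sum_(p <- g) lact (beta eta p.1) p.2 = eta) /\
    (forall eta : M, \sum_(p <- g) ract p.1 (beta p.2 eta) = eta).

End Calculus.

(* Main.v *)
Require Import Defs.
From mathcomp Require Import all_boot all_order all_algebra.
Set Implicit Arguments. Unset Strict Implicit. Unset Printing Implicit Defensive.
Import GRing.Theory.
Local Open Scope ring_scope.

Lemma F2P (k : 'F_2) : k = 0 \/ k = 1.
Proof. case: k => [[|[|m]] Hm]; [left|right|]; try by apply/val_inj. by []. Qed.

Definition tb (k : 'F_2) : bool := (val k == 1%N).
Lemma tbD a b : tb (a + b) = xorb (tb a) (tb b).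
Proof. by case: (F2P a) => ->; case: (F2P b) => ->; vm_compute. Qed.
Lemma tbM a b : tb (a * b) = (tb a && tb b).
Proof. by case: (F2P a) => ->; case: (F2P b) => ->; vm_compute. Qed.
Lemma tb0 : tb 0 = false. Proof. by vm_compute. Qed.
Lemma tb1 : tb 1 = true. Proof. by vm_compute. Qed.
Lemma tb_inj : injective tb.
Proof. by move=> a b; case: (F2P a) => ->; case: (F2P b) => ->; vm_compute. Qed.

Definition b3 := (bool * bool * bool)%type.
Definition TB (u : alg) : b3 := let: (a, b, c) := u in (tb a, tb b, tb c).
Lemma TB_inj : injective TB.
Proof. by move=> [[a b] c] [[a' b'] c'] [/tb_inj -> /tb_inj -> /tb_inj ->]. Qed.

Definition badd (u v : b3) : b3 :=
  let: (a, b, c) := u in let: (a', b', c') := v in (xorb a a', xorb b b', xorb c c').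
Definition bsc (k : bool) (u : b3) : b3 :=
  let: (a, b, c) := u in (k && a, k && b, k && c).
Lemma TBD u v : TB (u + v) = badd (TB u) (TB v).
Proof. by case: u => [[a b] c]; case: v => [[a' b'] c'] /=; rewrite !tbD. Qed.
Lemma TBsc k u : TB (sc3 k u) = bsc (tb k) (TB u).
Proof. by case: u => [[a b] c] /=; rewrite !tbM. Qed.

Definition bE1 : b3 := (true, false, false).
Definition bEX : b3 := (false, true, false).
Definition bEY : b3 := (false, false, true).
Definition bZ : b3 := (false, false, false).
Definition bxx (n : algname) : b3 :=
  match n with
  | AlgA => bZ | AlgB => bEX | AlgC => bEX | AlgD => bEY | AlgE => bEY
  | AlgF => (true, true, true) | AlgG => bEX end.
Definition bxy (n : algname) : b3 :=
  match n with
  | AlgA => bZ | AlgB => bZ | AlgC => bZ | AlgD => (false, true, true) | AlgE => bZ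
  | AlgF => (true, true, false) | AlgG => bEY end.
Definition byx (n : algname) : b3 :=
  match n with
  | AlgA => bZ | AlgB => bZ | AlgC => bZ | AlgD => (false, true, true) | AlgE => bZ
  | AlgF => (true, true, false) | AlgG => bZ end.
Definition byy (n : algname) : b3 :=
  match n with
  | AlgA => bZ | AlgB => bEY | AlgC => bZ | AlgD => bEX | AlgE => bZ
  | AlgF => bEX | AlgG => bZ end.

Definition bmul (n : algname) (u v : b3) : b3 :=
  let: (a, b, c) := u in let: (a', b', c') := v in
  badd (badd (badd (badd (badd (badd (bsc (a && a') bE1)
    (bsc (xorb (a && b') (b && a')) bEX)) (bsc (xorb (a && c') (c && a')) bEY))
    (bsc (b && b') (bxx n))) (bsc (b && c') (bxy n)))
    (bsc (c && b') (byx n))) (bsc (c && c') (byy n)).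

Lemma TBe1 : TB e1 = bE1. Proof. by vm_compute. Qed.
Lemma TBex : TB ex = bEX. Proof. by vm_compute. Qed.
Lemma TBey : TB ey = bEY. Proof. by vm_compute. Qed.
Lemma TBz : TB 0 = bZ. Proof. by vm_compute. Qed.
Lemma TBconsts n : [/\ TB (xx n) = bxx n, TB (xy n) = bxy n, TB (yx n) = byx n & TB (yy n) = byy n].
Proof. by case: n; split; vm_compute. Qed.

Lemma TBmul n u v : TB (amul n u v) = bmul n (TB u) (TB v).
Proof.
case: (TBconsts n) => h1 h2 h3 h4.
case: u => [[a b] c]; case: v => [[a' b'] c'].
rewrite /amul !TBD !TBsc !tbD !tbM h1 h2 h3 h4 TBe1 TBex TBey.
by [].
Qed.

Definition B3s : seq b3 := [:: (false,false,false); (false,false,true); (false,true,false); (false,true,true);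
  (true,false,false); (true,false,true); (true,true,false); (true,true,true)].
Lemma memB3 (u : b3) : u \in B3s.
Proof. by case: u => [[[] []] []]. Qed.

Definition bool_laws (n : algname) : bool :=
  all (fun u => all (fun v => all (fun x =>
    (bmul n (bmul n u v) x == bmul n u (bmul n v x)) &&
    (bmul n (badd u v) x == badd (bmul n u x) (bmul n v x)) &&
    (bmul n x (badd u v) == badd (bmul n x u) (bmul n x v))) B3s) B3s) B3s &&
  all (fun u => (bmul n bE1 u == u) && (bmul n u bE1 == u) && (badd u u == bZ) && (bmul n bZ u == bZ)) B3s.
Lemma bool_lawsT n : bool_laws n.
Proof. by case: n; vm_compute. Qed.
Definition beq3 (u v : b3) : bool :=
  let: (a, b, c) := u in let: (a', b', c') := v in
  eqb a a' && eqb b b' && eqb c c'.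
Lemma beq3P u v : beq3 u v = true -> u = v.
Proof. by case: u => [[[] []] []]; case: v => [[[] []] []]. Qed.

Definition bsig (sx sy u : b3) : b3 :=
  let: (a, b, c) := u in badd (badd (bsc a bE1) (bsc b sx)) (bsc c sy).
Definition bdel (dx dy u : b3) : b3 :=
  let: (a, b, c) := u in badd (bsc b dx) (bsc c dy).

Definition sigok n sx sy : bool :=
  all (fun u => all (fun v =>
    beq3 (bsig sx sy (bmul n u v)) (bmul n (bsig sx sy u) (bsig sx sy v))) [:: bEX; bEY]) [:: bEX; bEY].
Definition delok n sx sy dx dy : bool :=
  if all (fun u => all (fun v =>
    beq3 (bdel dx dy (bmul n u v)) (badd (bmul n (bdel dx dy u) (bsig sx sy v)) (bmul n u (bdel dx dy v)))) [:: bEX; bEY]) [:: bEX; bEY] then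
  has (fun a => has (fun b => beq3 (badd (bmul n a dx) (bmul n b dy)) bE1) B3s) B3s else false.

Definition good2 n sx sy G P : bool :=
  all (fun c => beq3 (bmul n c G) (bmul n G (bsig sx sy (bsig sx sy c)))) B3s &&
  beq3 (bmul n G (bsig sx sy P)) bE1.

Definition search (n : algname) : bool :=
  all (fun sx => all (fun sy => if sigok n sx sy then all (fun dx => all (fun dy =>
    if delok n sx sy dx dy then
    all (fun G => all (fun P => ~~ good2 n sx sy G P) B3s) B3s else true) B3s) B3s else true) B3s) B3s.

Definition search1 (n : algname) : bool :=
  all (fun sx => all (fun sy => if sigok n sx sy then all (fun dx => all (fun dy =>
    ~~ delok n sx sy dx dy) B3s) B3s else true) B3s) B3s.


Lemma searchT n : search n.
Proof. by case: n; vm_compute. Qed.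
Lemma search1T : [&& search1 AlgA, search1 AlgD & search1 AlgE].
Proof. by vm_compute. Qed.
Lemma beq3_refl u : beq3 u u.
Proof. by case: u => [[[] []] []]. Qed.

Lemma search_spec n sx sy dx dy G P :
  sigok n sx sy -> delok n sx sy dx dy -> good2 n sx sy G P -> False.
Proof.
move=> h1 h2 h3; have := searchT n; rewrite /search.
move=> /allP /(_ sx (memB3 _)) /allP /(_ sy (memB3 _)); rewrite h1.
move=> /allP /(_ dx (memB3 _)) /allP /(_ dy (memB3 _)); rewrite h2.
by move=> /allP /(_ G (memB3 _)) /allP /(_ P (memB3 _)); rewrite h3.
Qed.

Lemma search1_spec n sx sy dx dy : n = AlgA \/ n = AlgD \/ n = AlgE ->
  sigok n sx sy -> delok n sx sy dx dy -> False.
Proof.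
move=> hn h1 h2; have : search1 n.
  by move: search1T => /and3P [? ? ?]; case: hn => [->|[->|->]].
rewrite /search1.
move=> /allP /(_ sx (memB3 _)) /allP /(_ sy (memB3 _)); rewrite h1.
by move=> /allP /(_ dx (memB3 _)) /allP /(_ dy (memB3 _)); rewrite h2.
Qed.

Definition FB (b : b3) : alg :=
  let: (a, b, c) := b in mk3 (if a then 1 else 0) (if b then 1 else 0) (if c then 1 else 0).
Lemma TBFB b : TB (FB b) = b.
Proof. by case: b => [[[] []] []]; vm_compute. Qed.

Section Laws.
Variable n : algname.
Local Notation "a ** b" := (amul n a b) (at level 40).
Let L := bool_lawsT n.
Lemma bl_assoc u v x : bmul n (bmul n u v) x = bmul n u (bmul n v x).
Proof. by move: L => /andP [/allP /(_ u (memB3 _)) /allP /(_ v (memB3 _)) /allP /(_ x (memB3 _)) /andP [/andP [/eqP ? _] _] _]. Qed.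
Lemma bl_dl u v x : bmul n (badd u v) x = badd (bmul n u x) (bmul n v x).
Proof. by move: L => /andP [/allP /(_ u (memB3 _)) /allP /(_ v (memB3 _)) /allP /(_ x (memB3 _)) /andP [/andP [_ /eqP ?] _] _]. Qed.
Lemma bl_dr u v x : bmul n x (badd u v) = badd (bmul n x u) (bmul n x v).
Proof. by move: L => /andP [/allP /(_ u (memB3 _)) /allP /(_ v (memB3 _)) /allP /(_ x (memB3 _)) /andP [_ /eqP ?] _]. Qed.
Lemma bl_1l u : bmul n bE1 u = u.
Proof. by move: L => /andP [_ /allP /(_ u (memB3 _)) /andP [/andP [/andP [/eqP ? _] _] _]]. Qed.
Lemma bl_1r u : bmul n u bE1 = u.
Proof. by move: L => /andP [_ /allP /(_ u (memB3 _)) /andP [/andP [/andP [_ /eqP ?] _] _]]. Qed.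

Lemma amA u v x : (u ** v) ** x = u ** (v ** x).
Proof. by apply: TB_inj; rewrite !TBmul bl_assoc. Qed.
Lemma amDl u v x : (u + v) ** x = u ** x + v ** x.
Proof. by apply: TB_inj; rewrite !(TBmul, TBD) bl_dl. Qed.
Lemma amDr u v x : x ** (u + v) = x ** u + x ** v.
Proof. by apply: TB_inj; rewrite !(TBmul, TBD) bl_dr. Qed.
Lemma am1l u : e1 ** u = u.
Proof. by apply: TB_inj; rewrite TBmul TBe1 bl_1l. Qed.
Lemma am1r u : u ** e1 = u.
Proof. by apply: TB_inj; rewrite TBmul TBe1 bl_1r. Qed.
Lemma am0l u : 0 ** u = 0.
Proof. by apply: (addrI (0 ** u)); rewrite -amDl !addr0. Qed.
Lemma am0r u : u ** 0 = 0.
Proof. by apply: (addrI (u ** 0)); rewrite -amDr !addr0. Qed.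
End Laws.
Lemma sc30 v : sc3 0 v = 0.
Proof. by apply: TB_inj; rewrite TBsc tb0 TBz; case: (TB v) => [[? ?] ?]. Qed.
Lemma sc31 v : sc3 1 v = v.
Proof. by apply: TB_inj; rewrite TBsc tb1; case: (TB v) => [[? ?] ?]. Qed.

Lemma sc3z k : sc3 k 0 = 0.
Proof. by case: (F2P k) => ->; rewrite ?sc30 ?sc31. Qed.

Lemma alg_dec (u : alg) : u = sc3 u.1.1 e1 + sc3 u.1.2 ex + sc3 u.2 ey.
Proof.
apply: TB_inj; case: u => [[a b] c]; rewrite !TBD !TBsc TBe1 TBex TBey /=.
by case: (tb a); case: (tb b); case: (tb c).
Qed.

Lemma lin_dec (f : alg -> alg) : (forall u v, f (u + v) = f u + f v) ->
  forall u : alg, f u = sc3 u.1.1 (f e1) + sc3 u.1.2 (f ex) + sc3 u.2 (f ey).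
Proof.
move=> fD.
have f0 : f 0 = 0 by apply: (addrI (f 0)); rewrite -fD !addr0.
have fs k v : f (sc3 k v) = sc3 k (f v).
  by case: (F2P k) => ->; rewrite ?sc30 ?sc31.
by move=> u; rewrite {1}(alg_dec u) !fD !fs.
Qed.

Lemma mul_sc n a k v : amul n a (sc3 k v) = amul n (sc3 k a) v.
Proof. by case: (F2P k) => ->; rewrite ?sc30 ?sc31 ?am0l ?am0r. Qed.

Lemma selfadd0 (V : zmodType) (x : V) : x = x + x -> x = 0.
Proof. by move=> h; apply: (addrI x); rewrite addr0 -h. Qed.

Section Abs.
Variables (n : algname) (M : zmodType) (lact : alg -> M -> M) (ract : M -> alg -> M)
  (d : alg -> M) (w : M).
Hypothesis H : is_lp_fodc n lact ract d w.
Local Notation "a ** b" := (amul n a b) (at level 40).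

Let Hbim : is_bimodule n lact ract. Proof. by case: H. Qed.
Let Hfree : left_free_basis lact w. Proof. by case: H. Qed.
Let Hd : forall a b, d (a + b) = d a + d b. Proof. by case: H. Qed.
Let Hleib : forall a b, d (amul n a b) = ract (d a) b + lact a (d b). Proof. by case: H. Qed.
Let Hspan : forall m : M, exists s : seq (alg * alg), m = \sum_(p <- s) lact p.1 (d p.2).
Proof. by case: H. Qed.
Let lD1 : forall a b m, lact (a + b) m = lact a m + lact b m. Proof. by case: Hbim. Qed.
Let l1 : forall m, lact e1 m = m. Proof. by case: Hbim => _ [_ []]. Qed.
Let lM : forall a b m, lact (amul n a b) m = lact a (lact b m). Proof. by case: Hbim => _ [_ [_ []]]. Qed.
Let rD1 : forall a b m, ract m (a + b) = ract m a + ract m b. Proof. by case: Hbim => _ [_ [_ [_ []]]]. Qed.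
Let rD2 : forall a m m', ract (m + m') a = ract m a + ract m' a. Proof. by case: Hbim => _ [_ [_ [_ [_ []]]]]. Qed.
Let r1 : forall m, ract m e1 = m. Proof. by case: Hbim => _ [_ [_ [_ [_ [_ []]]]]]. Qed.
Let rM : forall a b m, ract m (amul n a b) = ract (ract m a) b. Proof. by case: Hbim => _ [_ [_ [_ [_ [_ [_ []]]]]]]. Qed.
Let lr : forall a b m, ract (lact a m) b = lact a (ract m b). Proof. by case: Hbim => _ [_ [_ [_ [_ [_ [_ [_ ]]]]]]]. Qed.

Definition coord (m : M) : alg := odflt 0 [pick a : alg | lact a w == m].

Lemma coordK m : lact (coord m) w = m.
Proof.
rewrite /coord; case: pickP => [a /eqP //|h].
by case: (Hfree m) => a [ha _]; move: (h a); rewrite ha eqxx.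
Qed.

Lemma coordU a m : lact a w = m -> coord m = a.
Proof.
move=> ha; case: (Hfree m) => b [hb U].
by rewrite -(U a (esym ha)) -(U (coord m) (esym (coordK m))).
Qed.

Lemma coordD m m' : coord (m + m') = coord m + coord m'.
Proof. by apply: coordU; rewrite lD1 !coordK. Qed.
Lemma coord0 : coord 0 = 0.
Proof. by apply: selfadd0; rewrite -coordD addr0. Qed.
Lemma coord_sum (I : Type) (s : seq I) (F : I -> M) :
  coord (\sum_(i <- s) F i) = \sum_(i <- s) coord (F i).
Proof.
elim: s => [|i s IH]; first by rewrite !big_nil coord0.
by rewrite !big_cons coordD IH.
Qed.
Lemma coordL a m : coord (lact a m) = a ** coord m.
Proof. by apply: coordU; rewrite lM coordK. Qed.
Lemma coordw : coord w = e1.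
Proof. by apply: coordU; rewrite l1. Qed.

Definition sig (c : alg) : alg := coord (ract w c).
Lemma coordR m c : coord (ract m c) = coord m ** sig c.
Proof. by apply: coordU; rewrite lM coordK -lr coordK. Qed.
Lemma sigD a b : sig (a + b) = sig a + sig b.
Proof. by rewrite /sig rD1 coordD. Qed.
Lemma sig1 : sig e1 = e1.
Proof. by rewrite /sig r1 coordw. Qed.
Lemma sigM a b : sig (a ** b) = sig a ** sig b.
Proof. by rewrite /sig rM coordR. Qed.

Definition del (a : alg) : alg := coord (d a).
Lemma delD a b : del (a + b) = del a + del b.
Proof. by rewrite /del Hd coordD. Qed.
Lemma delM a b : del (a ** b) = del a ** sig b + a ** del b.
Proof. by rewrite /del Hleib coordD coordR coordL. Qed.
Lemma del1 : del e1 = 0.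
Proof. by apply: selfadd0; rewrite -{1}(am1l n e1) delM sig1 am1r am1l. Qed.

Definition sx := TB (sig ex).
Definition sy := TB (sig ey).
Definition dx := TB (del ex).
Definition dy := TB (del ey).

Lemma TBsig u : TB (sig u) = bsig sx sy (TB u).
Proof.
rewrite (lin_dec sigD u) sig1 !TBD !TBsc TBe1.
by case: u => [[a b] c].
Qed.
Lemma TBdel u : TB (del u) = bdel dx dy (TB u).
Proof.
rewrite (lin_dec delD u) del1 !TBD !TBsc TBz.
rewrite /dx /dy; move: (TB (del ex)) (TB (del ey)) => [[? ?] ?] [[? ?] ?]; case: u => [[a b] c] /=; by case: (tb a); case: (tb b); case: (tb c).
Qed.

Lemma sigok_abs : sigok n sx sy.
Proof.
apply/allP => u _; apply/allP => v _.
by rewrite -(TBFB u) -(TBFB v) -!TBsig -TBmul -TBsig sigM TBmul beq3_refl.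
Qed.

Lemma span_abs : exists a b, a ** del ex + b ** del ey = e1.
Proof.
case: (Hspan w) => s hs.
have : coord w = \sum_(p <- s) (p.1 ** del p.2).
  by rewrite {1}hs coord_sum; apply: eq_bigr => p _; rewrite coordL.
rewrite coordw => ->.
elim: s {hs} => [|p s [a [b IH]]].
  by exists 0, 0; rewrite big_nil !am0l addr0.
exists (sc3 p.2.1.2 p.1 + a), (sc3 p.2.2 p.1 + b).
rewrite big_cons -IH (lin_dec delD p.2) del1 sc3z add0r amDr !mul_sc !amDl.
by rewrite addrACA.
Qed.

Lemma delok_abs : delok n sx sy dx dy.
Proof.
rewrite /delok.
have -> : all (fun u => all (fun v =>
    beq3 (bdel dx dy (bmul n u v)) (badd (bmul n (bdel dx dy u) (bsig sx sy v)) (bmul n u (bdel dx dy v))))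
      [:: bEX; bEY]) [:: bEX; bEY].
  apply/allP => u _; apply/allP => v _.
  by rewrite -(TBFB u) -(TBFB v) -TBmul -!TBdel -!TBsig -!TBmul -TBD delM beq3_refl.
case: span_abs => a [b h].
apply/hasP; exists (TB a); first exact: memB3.
apply/hasP; exists (TB b); first exact: memB3.
by rewrite /dx /dy -!TBmul -TBD h TBe1 beq3_refl.
Qed.

Lemma am_sumr (I : Type) (s : seq I) (F : I -> alg) c :
  c ** (\sum_(i <- s) F i) = \sum_(i <- s) c ** F i.
Proof.
elim: s => [|i s IH]; first by rewrite !big_nil am0r.
by rewrite !big_cons amDr IH.
Qed.
Lemma am_suml (I : Type) (s : seq I) (F : I -> alg) c :
  (\sum_(i <- s) F i) ** c = \sum_(i <- s) F i ** c.
Proof.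
elim: s => [|i s IH]; first by rewrite !big_nil am0l.
by rewrite !big_cons amDl IH.
Qed.

Lemma no_metric g : central lact ract g -> invertible n lact ract g -> False.
Proof.
move=> hc [beta [[[b1 b2 b3] bl br] [c1 c2]]].
pose Gs := \sum_(p <- g) coord p.1 ** sig (coord p.2).
pose beta0 := fun m k => coord m ** sig (coord k).
have hb : balanced lact ract beta0.
  split => [m m' k|m k k'|m a k]; rewrite /beta0.
  - by rewrite coordD amDl.
  - by rewrite coordD sigD amDr.
  - by rewrite coordR coordL sigM amA.
have hC c : c ** Gs = Gs ** sig (sig c).
  have := hc c alg beta0 hb; rewrite !big_map /beta0 /= => h.
  rewrite /Gs am_sumr am_suml.
  have -> : \sum_(p <- g) c ** (coord p.1 ** sig (coord p.2)) =
            \sum_(p <- g) coord (lact c p.1) ** sig (coord p.2).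
    by apply: eq_bigr => p _; rewrite coordL amA.
  rewrite h; apply: eq_bigr => p _.
  by rewrite coordR sigM amA.
pose P := beta w w.
have hI : Gs ** sig P = e1.
  have := c2 w; move/(congr1 coord); rewrite coord_sum coordw => <-.
  rewrite am_suml; apply: eq_bigr => p _.
  have -> : beta p.2 w = coord p.2 ** P by rewrite -[in LHS](coordK p.2) bl.
  by rewrite coordR sigM amA.
apply: (@search_spec n sx sy dx dy (TB Gs) (TB P) (sigok_abs) (delok_abs)).
rewrite /good2; apply/andP; split.
  apply/allP => c _; rewrite -(TBFB c) -!TBsig -!TBmul hC beq3_refl //.
by rewrite -TBsig -TBmul hI TBe1 beq3_refl.
Qed.
End Abs.

Local Close Scope ring_scope.

Theorem mainTheorem3 :
  (forall n : algname, n = AlgA \/ n = AlgD \/ n = AlgE ->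
     forall (M : zmodType) (lact : alg -> M -> M) (ract : M -> alg -> M)
            (d : alg -> M) (w : M),
       ~ is_lp_fodc n lact ract d w) /\
  (forall (n : algname) (M : zmodType) (lact : alg -> M -> M)
          (ract : M -> alg -> M) (d : alg -> M) (w : M),
     is_lp_fodc n lact ract d w ->
     forall g : seq (M * M),
       ~ (central lact ract g /\ invertible n lact ract g)).
Proof.
split.
- move=> n hn M lact ract d w H.
  exact: (search1_spec hn (sigok_abs H) (delok_abs H)).
- move=> n M lact ract d w H g [hc hi].
  exact: (no_metric H hc hi).
Qed.
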